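(* Let $\mathcal{S} = (X, \xrightarrow{\Sigma}, \leq)$ be a very-WSTS and let $I_0$ be an ideal of $X$. Then the Ideal Karp-Miller algorithm, run on $\mathcal{S}$ from $I_0$, terminates.
   Context: A labeled transition system $\mathcal{S} = (X, \xrightarrow{\Sigma}, \leq)$ consists of a set $X$ of states, a finite alphabet $\Sigma$, a relation $\xrightarrow{a} \subseteq X \times X$ for each $a \in \Sigma$, and a quasi-ordering $\leq$ on $X$. It is a WSTS if $\leq$ is a well-quasi-ordering and it is monotone (if $x \xrightarrow{a} y$ and $x' \geq x$ then $x' \xrightarrow{*} y'$ for some $y' \geq y$). It has strong monotonicity if $x \xrightarrow{a} y$ and $x' \geq x$ imply $x' \xrightarrow{a} y'$ for some $y' \geq y$; it has strong-strict monotonicity if moreover $x \xrightarrow{a} y$ and $x' > x$ imply $x' \xrightarrow{a} y'$ for some $y' > y$. It is deterministic if each state has at most one $a$-successor for each $a \in \Sigma$. An ideal of $X$ is a nonempty downwards-closed directed subset of $X$; $\mathrm{Idl}(X)$ denotes the set of ideals. For a downwards-closed $D \subseteq X$, its ideal decomposition is the (finite) set of maximal ideals contained in $D$. The completion of $\mathcal{S}$ is the transition system $(\mathrm{Idl}(X), \xrightarrow{\Sigma}_{c}, \subseteq)$ where $I \xrightarrow{a}_{c} J$ iff $J$ belongs to the ideal decomposition of the downward closure of the set of $a$-successors of elements of $I$; it is finitely branching. When the completion is deterministic, $w(I)$ denotes the unique $w$-successor of $I$ in the completion, if defined. An acceleration candidate is a sequence $I_0 \subset I_1 \subset \cdots$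 of ideals. Levels: level $0$ of $\mathrm{Idl}(X)$ is $\mathrm{Idl}(X)$, and level $n>0$ is the set of unions $\bigcup_i I_i$ of acceleration candidates $I_0 \subset I_1 \subset \cdots$ of elements of level $n-1$. $\mathrm{Idl}(X)$ has finitely many levels if some level is empty. A very-WSTS is a WSTS $\mathcal{S}$ with strong monotonicity whose completion is a deterministic WSTS (in particular $\mathrm{Idl}(X)$ is well-quasi-ordered by $\subseteq$) with strong-strict monotonicity, and such that $\mathrm{Idl}(X)$ has finitely many levels. For $w \in \Sigma^+$ and an ideal $I$, the acceleration $w^\infty(I)$ is $\bigcup_{k \in \mathbb{N}} w^k(I)$ if $I \subset w(I)$, and $I$ otherwise. The Ideal Karp-Miller algorithm builds a tree whose nodes are labeled by pairs $\langle I, n\rangle$ (an ideal and a number of accelerations): it starts with a root labeled $\langle I_0, 0\rangle$; while there is an unmarked node $c : \langle I, n\rangle$, if $c$ has an ancestor labeled $\langle I', n'\rangle$ with $I' = I$ it marks $c$; otherwise, if $c$ has an ancestor $c' : \langle I', n'\rangle$ with $I' \subset I$ and $n' = n$, it replaces the label of $c$ by $\langle w^\infty(I), n+1\rangle$ where $w$ is the sequence of labels on the path from $c'$ to $c$; then, for every $a \in \Sigma$ such that $a(I)$ is defined (with $I$ the current ideal of $c$), it adds an $a$-labeled child of $c$ labeled $\langle a(I), n\rangle$ (with $n$ the current counter of $c$), and marks $c$. It returns the tree. *)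

(* Defs.v *)
From mathcomp Require Import all_boot.
From mathcomp Require Import boolp classical_sets.

Set Implicit Arguments.
Unset Strict Implicit.
Unset Printing Implicit Defensive.

Local Open Scope classical_set_scope.

Section LTS.
Variables (Sigma : finType) (S : Type).
Variable le : S -> S -> Prop.
Variable trans : Sigma -> S -> S -> Prop.

Definition quasi_order := (forall x, le x x) /\ (forall x y z, le x y -> le y z -> le x z).

Definition wqo := quasi_order /\
  forall f : nat -> S, exists i j, (i < j)%N /\ le (f i) (f j).

Inductive reach : S -> S -> Prop :=
| reach_refl x : reach x x
| reach_step a x y z : trans a x y -> reach y z -> reach x z.

Definition monotone := forall a x y x', trans a x y -> le x x' ->
  exists y', reach x' y' /\ le y y'.

Definition strong_monotone := forall a x y x', trans a x y -> le x x' ->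
  exists y', trans a x' y' /\ le y y'.

Definition lt_of x y := le x y /\ ~ le y x.

Definition strong_strict_monotone := strong_monotone /\
  forall a x y x', trans a x y -> lt_of x x' ->
  exists y', trans a x' y' /\ lt_of y y'.

Definition deterministic := forall a x y y', trans a x y -> trans a x y' -> y = y'.

Definition WSTS := wqo /\ monotone.
End LTS.

Section Ideals.
Variables (Sigma : finType) (X : Type).
Variable le : X -> X -> Prop.
Variable trans : Sigma -> X -> X -> Prop.

Definition down_closed (D : set X) := forall x y, le x y -> D y -> D x.

Definition directed (D : set X) :=
  forall x y, D x -> D y -> exists z, [/\ D z, le x z & le y z].

Definition is_ideal (D : set X) := D !=set0 /\ down_closed D /\ directed D.

Definition Idl := {I : set X | is_ideal I}.

Definition down_closure (A : set X) : set X := [set x | exists2 y, A y & le x y].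

Definition ideal_decomposition (D : set X) : set (set X) :=
  [set I | [/\ is_ideal I, I `<=` D &
     forall J, is_ideal J -> I `<=` J -> J `<=` D -> J = I]].

Definition post (a : Sigma) (I : set X) : set X :=
  [set y | exists2 x, I x & trans a x y].

Definition ctrans (a : Sigma) (I J : set X) : Prop :=
  is_ideal I /\ ideal_decomposition (down_closure (post a I)) J.

Definition Idl_incl (I J : Idl) : Prop := proj1_sig I `<=` proj1_sig J.
Definition Idl_trans (a : Sigma) (I J : Idl) : Prop := ctrans a (proj1_sig I) (proj1_sig J).

Fixpoint level (n : nat) : set (set X) :=
  match n with
  | 0 => is_ideal
  | n'.+1 => [set U | exists f : nat -> set X,
       [/\ (forall i, level n' (f i)), (forall i, f i `<` f i.+1) &
           U = \bigcup_i f i]]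
  end.

Definition finitely_many_levels := exists n, level n = set0.

Definition very_WSTS :=
  [/\ WSTS le trans, strong_monotone le trans,
      deterministic Idl_trans /\ WSTS Idl_incl Idl_trans,
      strong_strict_monotone Idl_incl Idl_trans & finitely_many_levels].

Fixpoint wrun (w : seq Sigma) (I J : set X) : Prop :=
  match w with
  | [::] => J = I
  | a :: w' => exists K, ctrans a I K /\ wrun w' K J
  end.

Fixpoint wpow (k : nat) (w : seq Sigma) (I J : set X) : Prop :=
  match k with
  | 0 => J = I
  | k'.+1 => exists K, wpow k' w I K /\ wrun w K J
  end.

Definition accel (w : seq Sigma) (I J : set X) : Prop :=
  ((exists I1, wrun w I I1 /\ I `<` I1) /\
     J = [set x | exists k K, wpow k w I K /\ K x])
  \/ (~ (exists I1, wrun w I I1 /\ I `<` I1) /\ J = I).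

(* The Ideal Karp-Miller algorithm as a (nondeterministic) step        *)
(* relation on trees. A node is identified by the word of edge labels  *)
(* from the root; its content is (ideal, acceleration counter, mark).  *)
Definition kmtree := seq Sigma -> option (set X * nat * bool).

Definition km_init (I0 : set X) : kmtree :=
  fun c => if c == [::] then Some (I0, 0%N, false) else None.

Definition ancestor_path (c' c w : seq Sigma) := w != [::] /\ c = c' ++ w.

(* one iteration of the while loop, processing the unmarked node c *)
Definition km_step (t t' : kmtree) : Prop :=
  exists c I n, t c = Some (I, n, false) /\
  (
    ((exists c' w n' b', ancestor_path c' c w /\ t c' = Some (I, n', b')) /\
     t' = (fun d => if d == c then Some (I, n, true) else t d))
  \/
    ((~ exists c' w n' b', ancestor_path c' c w /\ t c' = Some (I, n', b')) /\
     exists I2 n2,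
       (
         (exists c' w I' b', [/\ ancestor_path c' c w, t c' = Some (I', n, b'),
                                I' `<` I, accel w I I2 & n2 = n.+1])
       \/
         ((~ exists c' w I' b', [/\ ancestor_path c' c w, t c' = Some (I', n, b')
                                  & I' `<` I]) /\ I2 = I /\ n2 = n) ) /\
       t' c = Some (I2, n2, true) /\
       (forall a, (exists J, ctrans a I2 J /\ t' (rcons c a) = Some (J, n2, false))
               \/ ((~ exists J, ctrans a I2 J) /\ t' (rcons c a) = t (rcons c a))) /\
       (forall d, d != c -> (forall a, d != rcons c a) -> t' d = t d))).

Definition km_terminates (I0 : set X) : Prop :=
  Acc (fun t' t => km_step t t') (km_init I0).

End Ideals.

(* Main.v *)
Require Import Defs.
From mathcomp Require Import all_boot.
From mathcomp Require Import boolp classical_sets.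
Set Implicit Arguments. Unset Strict Implicit. Unset Printing Implicit Defensive.
Local Open Scope classical_set_scope.

Section Main.
Variables (Sigma : finType) (X : Type) (le : X -> X -> Prop) (trans : Sigma -> X -> X -> Prop).
Hypothesis HV : very_WSTS le trans.

Definition cpost (a : Sigma) (I : set X) : set X := down_closure le (post trans a I).

Lemma le_refl x : le x x.
Proof. by case: HV => [[[[r _] _] _] _ _ _ _]. Qed.
Lemma le_trans x y z : le x y -> le y z -> le x z.
Proof. by case: HV => [[[[_ t] _] _] _ _ _ _]; apply: t. Qed.

Lemma chain_mono (f : nat -> set X) : (forall i, f i `<=` f i.+1) ->
  forall i j, (i <= j)%N -> f i `<=` f j.
Proof.
move=> H i j /subnKC <-; elim: (j - i) => [|k IH]; first by rewrite addn0.
by apply: subset_trans IH _; rewrite addnS; apply: H.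
Qed.

Lemma ideal_union (f : nat -> set X) : (forall i, is_ideal le (f i)) ->
  (forall i, f i `<=` f i.+1) -> is_ideal le (\bigcup_i f i).
Proof.
move=> Hi Hs; split; [|split].
- case: (Hi 0) => [[x fx] _]; exists x; exists 0 => //.
- move=> x y xy [i _ fy]; exists i => //; case: (Hi i) => _ [dc _]; exact: dc xy fy.
- move=> x y [i _ fx] [j _ fy].
  have fx' : f (maxn i j) x by apply: chain_mono Hs _ _ (leq_maxl i j) _ fx.
  have fy' : f (maxn i j) y by apply: chain_mono Hs _ _ (leq_maxr i j) _ fy.
  case: (Hi (maxn i j)) => _ [_ dir]; case: (dir _ _ fx' fy') => z [fz xz yz].
  by exists z; split => //; exists (maxn i j).
Qed.

Lemma cpost_dc a I : down_closed le (cpost a I).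
Proof. move=> x y xy [z pz yz]; exists z => //; exact: le_trans xy yz. Qed.

Lemma max_ideal (D : set X) y : down_closed le D -> D y ->
  exists M, ideal_decomposition le D M /\ M y.
Proof.
move=> dcD Dy.
pose P (A : set X) := [/\ A `<=` D, down_closed le A, directed le A & (A !=set0 -> A y)].
have [|A [PA maxA]] := @Zorn_bigcup X P.
  move=> F FP tot; split.
  - by move=> x [A FA Ax]; case: (FP A FA) => + _ _ _; apply.
  - move=> x z xz [A FA Az]; exists A => //; case: (FP A FA) => _ + _ _; apply; eauto.
  - move=> x z [A FA Ax] [B FB Bz].
    case: (tot A B FA FB) => sub.
    + case: (FP B FB) => _ _ + _ => /(_ x z (sub _ Ax) Bz) [u [Bu xu zu]].
      by exists u; split => //; exists B.
    + case: (FP A FA) => _ _ + _ => /(_ x z Ax (sub _ Bz)) [u [Au xu zu]].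
      by exists u; split => //; exists A.
  - move=> [x [A FA Ax]]; exists A => //; case: (FP A FA) => _ _ _; apply; by exists x.
have Py : P (down_closure le [set y]).
  split.
  - by move=> x [z -> xz]; exact: dcD xz Dy.
  - by move=> x z xz [u -> zu]; exists y => //; exact: le_trans xz zu.
  - by move=> x z [u -> xu] [v -> zv]; exists y; split => //; exists y => //; exact: le_refl.
  - by move=> _; exists y => //; exact: le_refl.
have Ay : A y.
  case: PA => _ _ _; apply; apply/set0P/negP => /eqP A0.
  apply: (maxA _ _ Py); rewrite A0; split; first by [].
  by move=> /(_ y); apply; exists y => //; exact: le_refl.
case: PA => AD dcA dirA _.
have iA : is_ideal le A by split; [exists y|].
exists A; split => //; split => // J iJ AJ JD.
apply/seteqP; split => //.
apply: contrapT => nJA; apply: (maxA J); first by split.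
case: iJ => _ [dcJ dirJ]; split => // _; exact: AJ.
Qed.

Lemma ctrans_ideal a I J : ctrans le trans a I J -> is_ideal le I /\ is_ideal le J.
Proof. by case=> iI [iJ _ _]. Qed.

Lemma ctrans_eq a I J : ctrans le trans a I J -> J = cpost a I.
Proof.
move=> tr; case: (tr) => iI [iJ JD _]; apply/seteqP; split => // y Dy.
have [M [dM My]] := max_ideal (@cpost_dc a I) Dy.
case: (dM) => iM _ _.
case: HV => _ _ [det _] _ _.
have := det a (exist _ I iI) (exist _ J iJ) (exist _ M iM) tr (conj iI dM).
by move=> /(congr1 sval) /= ->.
Qed.

Lemma ctrans_cpost a I y : is_ideal le I -> cpost a I y -> ctrans le trans a I (cpost a I).
Proof.
move=> iI Dy; have [M [dM _]] := max_ideal (@cpost_dc a I) Dy.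
have tr : ctrans le trans a I M by [].
by rewrite -(ctrans_eq tr).
Qed.

Lemma ctrans_mono a I J I' : ctrans le trans a I J -> I `<=` I' -> is_ideal le I' ->
  ctrans le trans a I' (cpost a I') /\ J `<=` cpost a I'.
Proof.
move=> tr sub iI'; rewrite (ctrans_eq tr).
have cs : cpost a I `<=` cpost a I'.
  by move=> x [z [u Iu tu] xz]; exists z => //; exists u => //; apply: sub.
case: (ctrans_ideal tr) => _ [[y Jy] _]; rewrite (ctrans_eq tr) in Jy.
split => //; exact: ctrans_cpost iI' (cs _ Jy).
Qed.

Lemma ctrans_strict a I J I' : ctrans le trans a I J -> I `<` I' -> is_ideal le I' ->
  ctrans le trans a I' (cpost a I') /\ J `<` cpost a I'.
Proof.
move=> tr [sub nsub] iI'; have [tr' _] := ctrans_mono tr sub iI'.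
case: (ctrans_ideal tr) => iI iJ; case: (ctrans_ideal tr') => _ iJ'.
case: HV => _ _ [det _] [_ ss] _.
have [y' [try' lty']] := ss a (exist _ I iI) (exist _ J iJ) (exist _ I' iI') tr (conj sub nsub).
have := ctrans_eq try'; move: lty'; case: y' {try'} => /= K iK [h1 h2] eK.
by subst K; split.
Qed.


Lemma level_ideal n U : level le n U -> is_ideal le U.
Proof.
elim: n U => [|n IH] U //= [f [lf sf ->]]; apply: ideal_union.
- by move=> i; apply: IH.
- by move=> i; apply: properW.
Qed.

Lemma level_succ n U : level le n.+1 U -> level le n U.
Proof.
elim: n U => [|n IH] U [f [lf sf ->]].
- by apply: ideal_union => // i; apply: properW.
- by simpl; exists f; split => // i; apply: IH; apply: lf.
Qed.

Lemma level_le m n U : (m <= n)%N -> level le n U -> level le m U.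
Proof.
move=> /subnKC <-; elim: (n - m) U => [|k IH] U; first by rewrite addn0.
by rewrite addnS => /level_succ /IH.
Qed.

Lemma level_bound : exists N, forall n U, level le n U -> (n < N)%N.
Proof.
case: HV => _ _ _ _ [N HN]; exists N => n U lU; rewrite ltnNge; apply/negP => Nn.
have := level_le Nn lU; by rewrite HN.
Qed.

Lemma level_ctrans n a I J : level le n I -> ctrans le trans a I J -> level le n J.
Proof.
elim: n a I J => [|n IH] a I J.
  by move=> _ /ctrans_ideal [].
move=> /= [f [lf sf ->]] tr.
have fi i : is_ideal le (f i) by apply: level_ideal (lf i).
have fs : forall i j, (i <= j)%N -> f i `<=` f j.
  by apply: chain_mono => i; apply: properW.
have eJ := ctrans_eq tr.
case: (ctrans_ideal tr) => _ [[y Jy] _].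
rewrite eJ in Jy; case: Jy => z [x [k0 _ fx] txz] yz.
pose g i := cpost a (f (i + k0)).
have trg i : ctrans le trans a (f (i + k0)) (g i).
  apply: (@ctrans_cpost _ _ z) => //; exists z; last exact: le_refl.
  by exists x => //; apply: fs (leq_addl _ _) _ fx.
rewrite eJ /=; exists g; split.
- by move=> i; apply: IH (trg i).
- move=> i; have [_ ] := ctrans_strict (trg i) (sf (i + k0)) (fi _).
  by rewrite /g addSn.
- apply/seteqP; split.
  + move=> u [v [x' [k _ fx'] tx'] uv]; exists k => //; exists v => //; exists x' => //.
    by apply: fs (leq_addr _ _) _ fx'.
  + move=> u [i _ [v [x' fx' tx'] uv]]; exists v => //; exists x' => //; by exists (i + k0).
Qed.

Definition wf (w : seq Sigma) (I : set X) := foldl (fun K a => cpost a K) I w.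

Lemma wrun_wf w I J : wrun le trans w I J -> J = wf w I.
Proof.
elim: w I => [|a w IH] I /=; first by [].
by move=> [K [tr wr]]; rewrite (IH _ wr) (ctrans_eq tr).
Qed.

Lemma wrun_rcons w a I J : wrun le trans (rcons w a) I J <->
  exists K, wrun le trans w I K /\ ctrans le trans a K J.
Proof.
elim: w I => [|b w IH] I /=; split.
- by move=> [K [tr ->]]; exists I.
- by move=> [K [-> tr]]; exists J.
- by move=> [K [tr /IH [K' [wr tr']]]]; exists K'; split => //; exists K.
- by move=> [K' [[K [tr wr]] tr']]; exists K; split => //; apply/IH; exists K'.
Qed.

Lemma wrun_mono w I J I' : wrun le trans w I J -> I `<=` I' -> is_ideal le I' ->
  exists J', [/\ wrun le trans w I' J', J `<=` J', is_ideal le J' & (I `<` I' -> J `<` J')].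
Proof.
elim: w I J I' => [|a w IH] I J I' /=.
  by move=> -> sub iI'; exists I'.
move=> [K [tr wr]] sub iI'.
have [tr' sK] := ctrans_mono tr sub iI'.
have [_ iK'] := ctrans_ideal tr'.
have [J' [wr' sJ iJ' st]] := IH _ _ _ wr sK iK'.
exists J'; split => //; first by exists (cpost a I').
move=> lt; apply: st; exact: (ctrans_strict tr lt iI').2.
Qed.

Lemma wrun_level n w I J : level le n I -> wrun le trans w I J -> level le n J.
Proof.
elim: w I => [|a w IH] I /=; first by move=> + ->.
by move=> lI [K [tr wr]]; apply: IH wr; apply: level_ctrans tr.
Qed.

Lemma accel_level n w I I1 J : level le n I -> wrun le trans w I I1 -> I `<` I1 ->
  accel le trans w I J -> level le n.+1 J.
Proof.
move=> lI wr lt [[_ ->]|[nex _]]; last by exfalso; apply: nex; exists I1.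
pose f k := iter k (wf w) I.
have key : forall k, [/\ wpow le trans k w I (f k), wrun le trans w (f k) (f k.+1),
    f k `<` f k.+1 & level le n (f k)].
  elim=> [|k [wp wr' lt' lk]].
  - by split => //=; rewrite -(wrun_wf wr).
  - have lk1 := wrun_level lk wr'.
    have [J' [wr'' _ _ st]] := wrun_mono wr' (properW lt') (level_ideal lk1).
    have eJ' := wrun_wf wr''.
    split => //.
    + by exists (f k).
    + by rewrite [f k.+2]/f iterS -/(f k.+1) -eJ'.
    + by rewrite [f k.+2]/f iterS -/(f k.+1) -eJ'; apply: st.
have wpf : forall k K, wpow le trans k w I K -> K = f k.
  elim=> [|k IH] K /=; first by [].
  by move=> [K' [wp wr']]; rewrite (wrun_wf wr') (IH _ wp).
exists f; split.
- by move=> i; case: (key i).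
- by move=> i; case: (key i).
- apply/seteqP; split.
  + by move=> x [k [K [wp Kx]]]; exists k => //; rewrite -(wpf _ _ wp).
  + by move=> x [k _ fx]; exists k, (f k); split => //; case: (key k).
Qed.


Variable I0 : set X.
Hypothesis iI0 : is_ideal le I0.

Definition hist := seq Sigma -> (set X * nat)%type.

Definition pre (h : hist) (p : seq Sigma) : set X * nat :=
  match rev p with
  | [::] => (I0, 0)
  | a :: rq => (cpost a (h (rev rq)).1, (h (rev rq)).2)
  end.

Lemma pre_nil h : pre h [::] = (I0, 0). Proof. by []. Qed.
Lemma pre_rcons h q a : pre h (rcons q a) = (cpost a (h q).1, (h q).2).
Proof. by rewrite /pre rev_rcons revK. Qed.

Lemma pre_agree h h' p : (forall q a, p = rcons q a -> h q = h' q) -> pre h p = pre h' p.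
Proof.
case/lastP: p => [|q a] H; first by [].
by rewrite !pre_rcons (H q a).
Qed.

Definition validnode (h : hist) (p : seq Sigma) : Prop :=
  [/\ (forall q a, p = rcons q a -> ctrans le trans a (h q).1 (pre h p).1),
      ~ (exists q w, ancestor_path q p w /\ (h q).1 = (pre h p).1) &
      (exists q w, [/\ ancestor_path q p w, (h q).2 = (pre h p).2, (h q).1 `<` (pre h p).1,
           accel le trans w (pre h p).1 (h p).1 & (h p).2 = (pre h p).2.+1])
      \/ ((~ exists q w, [/\ ancestor_path q p w, (h q).2 = (pre h p).2 & (h q).1 `<` (pre h p).1])
           /\ h p = pre h p)].

Definition pref (r p : seq Sigma) := exists w, p = r ++ w.
Definition valid h c := forall p, pref p c -> validnode h p.

Lemma validnode_agree h h' p : (forall r, pref r p -> h r = h' r) ->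
  validnode h p -> validnode h' p.
Proof.
move=> E.
have Ep : pre h p = pre h' p.
  by apply: pre_agree => q a e; apply: E; exists [:: a]; rewrite e cats1.
have Ea : forall q w, ancestor_path q p w -> h q = h' q.
  by move=> q w [_ e]; apply: E; exists w.
have Eh : h p = h' p by apply: E; exists [::]; rewrite cats0.
rewrite /validnode -Ep -Eh.
case=> [D NE P]; split.
- move=> q a e; rewrite -(Ea q [:: a]); first exact: D q a e.
  by split => //; rewrite e cats1.
- by move=> [q [w [an e]]]; apply: NE; exists q, w; rewrite (Ea q w an).
- case: P => [[q [w [an e1 e2 ac e3]]]|[nx e]].
  + by left; exists q, w; rewrite -(Ea q w an).
  + right; split => // [[q [w [an e1 e2]]]]; apply: nx; exists q, w.
    by rewrite (Ea q w an).
Qed.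

Definition inv (h : hist) (t : kmtree Sigma X) : Prop :=
  (forall d l, t d = Some l -> forall p w, w != [::] -> d = p ++ w ->
      validnode h p /\ t p = Some (h p, true)) /\
  (forall d J m, t d = Some (J, m, false) ->
      (J, m) = pre h d /\ (forall q a, d = rcons q a -> ctrans le trans a (h q).1 J)).

Definition marked (t : kmtree Sigma X) d := exists l, t d = Some (l, true).

Lemma size_anc (p w d : seq Sigma) : w != [::] -> d = p ++ w -> (size p < size d)%N.
Proof. by case: w => // a w _ ->; rewrite size_cat /= addnS ltnS leq_addr. Qed.

Lemma neq_anc (p w d : seq Sigma) : w != [::] -> d = p ++ w -> p != d.
Proof. move=> nw e; apply/eqP => pd; have := size_anc nw e; by rewrite pd ltnn. Qed.

Lemma anc_split (p w c : seq Sigma) a : w != [::] -> rcons c a = p ++ w ->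
  exists w', c = p ++ w'.
Proof.
case/lastP: w => [|w' b] // _; rewrite -rcons_cat => /rcons_inj [-> _]; by exists w'.
Qed.

Lemma init_inv : inv (fun _ => (I0, 0)) (km_init I0).
Proof.
split.
- move=> d l; rewrite /km_init; case: eqP => // -> _ p w; case: w => // a w _.
  by case: p.
- move=> d J m; rewrite /km_init; case: eqP => // -> [<- <-]; split => // q a.
  by case: q.
Qed.


Lemma step_inv h t t' : inv h t -> km_step le trans t t' ->
  exists c h', [/\ inv h' t', (forall d, marked t d -> marked t' d), marked t' c,
     ~ marked t c & exists l, t c = Some l].
Proof.
move=> [Hanc Hunm] [c [I [n [tc Hcase]]]].
have [Epre Hdef] := Hunm _ _ _ tc.
have Fanc : forall q w, ancestor_path q c w -> validnode h q /\ t q = Some (h q, true).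
  by move=> q w [nw e]; apply: Hanc tc q w nw e.
have Fnot : forall d l u, t d = Some l -> u != [::] -> d = c ++ u -> False.
  by move=> d l u td nu e; have [_] := Hanc _ _ td _ _ nu e; rewrite tc.
have Fchild : forall a, t (rcons c a) = None.
  move=> a; case E: (t (rcons c a)) => [l|] //; exfalso.
  by apply: (Fnot _ _ [:: a] E) => //; rewrite cats1.
have Fnm : ~ marked t c by move=> [l]; rewrite tc.
case: Hcase => [[_ et']|[NE [I2 [n2 [Hpost [tc' [Hch Hoth]]]]]]].
-
  exists c, h; subst t'; split.
  + split.
    * move=> d l; case: eqP => [-> _ p w nw e|nd td p w nw e].
      - have [vp tp] := Fanc p w (conj nw e); split => //.
        by rewrite (negbTE (neq_anc nw e)).
      - have [vp tp] := Hanc _ _ td p w nw e; split => //.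
        case: eqP => // pc; subst p; by rewrite tc in tp.
    * move=> d J m; case: eqP => // _ td; exact: Hunm td.
  + move=> d [l td]; exists l; case: eqP => // dc; subst d; by rewrite tc in td.
  + by exists (I, n); rewrite eqxx.
  + by [].
  + by exists (I, n, false).
-
  pose h' := fun d => if d == c then (I2, n2) else h d.
  have h'c : h' c = (I2, n2) by rewrite /h' eqxx.
  have h'd : forall d, d != c -> h' d = h d by move=> d nd; rewrite /h' (negbTE nd).
  have Eanc : forall q w, ancestor_path q c w -> h' q = h q.
    by move=> q w [nw e]; apply: h'd; apply: neq_anc nw e.
  have Epre' : pre h' c = (I, n).
    rewrite Epre; apply: esym; apply: pre_agree => q a e; apply: esym.
    by apply: (Eanc q [:: a]); split => //; rewrite e cats1.
  have vc : validnode h' c.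
    rewrite /validnode Epre' h'c /=; split.
    * move=> q a e; rewrite (Eanc q [:: a]); last by split => //; rewrite e cats1.
      by apply: Hdef e.
    * move=> [q [w [an e]]]; apply: NE; exists q, w, (h q).2, true; split => //.
      have [_ tq] := Fanc q w an; rewrite tq; move: e; rewrite (Eanc q w an).
      by case: (h q) => /= J m ->.
    * case: Hpost => [[c' [w [I' [b' [an tc'' lt ac e2]]]]]|[nx [e1 e2]]].
      - left; exists c', w; have [_ tq] := Fanc c' w an.
        rewrite tc'' in tq; case: tq => hq _.
        by rewrite (Eanc c' w an) -hq; split.
      - right; subst I2 n2; split => // [[q [w [an e1 e2]]]]; apply: nx.
        exists q, w, (h' q).1, true; split => //.
        have [_ tq] := Fanc q w an; rewrite tq (Eanc q w an).
        by rewrite (Eanc q w an) in e1; case: (h q) e1 => J m /= ->.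
  have Hpc : forall p w, ancestor_path p c w -> validnode h' p /\ t' p = Some (h' p, true).
    move=> p w an; have [vp tp] := Fanc p w an; case: (an) => nw e.
    have ltp := size_anc nw e.
    split.
    * apply: validnode_agree vp => r [u eu]; rewrite h'd //; apply/eqP => rc.
      by move: ltp; rewrite eu rc size_cat; case: u {eu} => [|? ?]; rewrite ?addn0 ?ltnn // ltnNge leq_addr.
    * have pc : p != c by exact: neq_anc nw e.
      rewrite (h'd _ pc) Hoth //.
      move=> a; apply/eqP => pr; move: ltp; by rewrite pr size_rcons ltnNge leqnSn.
  exists c, h'; split.
  + split.
    * move=> d l td' p w nw e.
      case: (eqVneq d c) => [dc|ndc].
      - rewrite dc in e; exact: Hpc p w (conj nw e).
      case: (pselect (exists a, d = rcons c a)) => [[a da]|nda].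
      - rewrite da in e td'; have [w' cw] := anc_split nw e.
        case: (eqVneq w' [::]) => [w0|nw'].
        + subst w'; rewrite cats0 in cw; subst p; split => //; by rewrite tc' h'c.
        + exact: Hpc p w' (conj nw' cw).
      - have nda' : forall a, d != rcons c a by move=> a; apply/eqP => e'; apply: nda; exists a.
        rewrite Hoth // in td'.
        have [vp tp] := Hanc _ _ td' p w nw e.
        have npc : forall r, pref r p -> r != c.
          move=> r [u eu]; apply/eqP => rc; subst r; apply: (Fnot _ _ (u ++ w) td').
          + by case: u eu => // _; case: w nw e.
          + by rewrite e eu catA.
        split.
        + apply: validnode_agree vp => r pr; rewrite h'd //; exact: npc.
        + have pc : p != c by apply: npc; exists [::]; rewrite cats0.
          rewrite Hoth // ?h'd //.
          move=> a; apply/eqP => pe; subst p; apply: (Fnot _ _ (rcons [::] a ++ w) td').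
          * by [].
          * by rewrite e -cats1 catA.
    * move=> d J m td'.
      case: (eqVneq d c) => [dc|ndc]; first by subst d; rewrite tc' in td'.
      case: (pselect (exists a, d = rcons c a)) => [[a da]|nda].
      - subst d; case: (Hch a) => [[J' [tr tJ]]|[_ tJ]]; last by rewrite tJ Fchild in td'.
        rewrite tJ in td'; case: td' => <- <-.
        rewrite pre_rcons h'c (ctrans_eq tr); split => // q b /rcons_inj [<- <-].
        by rewrite h'c -(ctrans_eq tr).
      - have nda' : forall a, d != rcons c a by move=> a; apply/eqP => e'; apply: nda; exists a.
        rewrite Hoth // in td'.
        have [e1 e2] := Hunm _ _ _ td'.
        have Eq : forall q a, d = rcons q a -> h q = h' q.
          move=> q a dq; rewrite h'd //; apply/eqP => qc; subst q.
          by move: (nda' a); rewrite dq eqxx.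
        split.
        + by rewrite e1; apply: pre_agree.
        + by move=> q a dq; rewrite -(Eq q a dq); apply: e2 dq.
  + move=> d [l td]; exists l; rewrite Hoth //.
    * by apply/eqP => dc; subst d; apply: Fnm; exists l.
    * by move=> a; apply/eqP => da; subst d; rewrite Fchild in td.
  + by exists (I2, n2).
  + by [].
  + by exists (I, n, false).
Qed.


Lemma pref_trans r p c : pref r p -> pref p c -> pref r c.
Proof. by move=> [u ->] [v ->]; exists (u ++ v); rewrite catA. Qed.

Lemma pref_refl p : pref p p. Proof. by exists [::]; rewrite cats0. Qed.

Lemma pref_rcons p a c : pref (rcons p a) c -> pref p c.
Proof. by apply: pref_trans; exists [:: a]; rewrite cats1. Qed.

Lemma valid_pref h c p : valid h c -> pref p c -> valid h p.
Proof. by move=> v pc r rp; apply: v; apply: pref_trans rp pc. Qed.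

Lemma valid_root h : validnode h [::] -> h [::] = (I0, 0).
Proof.
case=> _ _ [[q [w [[nw e] _ _ _ _]]]|[_ ->]] //.
by move: e; case: w nw => // b w _; case: q.
Qed.

Lemma valid_step h p a : validnode h (rcons p a) ->
  ((h p).2 <= (h (rcons p a)).2)%N /\
  ((h (rcons p a)).2 = (h p).2 -> h (rcons p a) = pre h (rcons p a)).
Proof.
rewrite /validnode pre_rcons /=.
case=> _ _ [[q [w [_ _ _ _ ->]]]|[_ ->]] //=.
split; first exact: leqnSn.
by move=> /eqP; rewrite -[X in _ == X]addn0 -addn1 eqn_add2l.
Qed.

Lemma valid_mono h c q w : valid h c -> pref (q ++ w) c -> ((h q).2 <= (h (q ++ w)).2)%N.
Proof.
move=> v; elim/last_ind: w => [|w a IH]; first by rewrite cats0.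
rewrite -rcons_cat => pr; have := valid_step (v _ pr) => [[le1 _]].
by apply: leq_trans (IH (pref_rcons pr)) le1.
Qed.

Lemma valid_run h c q w : valid h c -> pref (q ++ w) c -> (h q).2 = (h (q ++ w)).2 ->
  wrun le trans w (h q).1 (h (q ++ w)).1.
Proof.
move=> v; elim/last_ind: w => [|w a IH]; first by rewrite cats0.
rewrite -rcons_cat => pr e.
have pr' := pref_rcons pr.
have [le1 ee] := valid_step (v _ pr).
have m1 := valid_mono v pr'.
have e1 : (h q).2 = (h (q ++ w)).2.
  by apply/eqP; rewrite eqn_leq m1 e le1.
have wr := IH pr' e1.
have [D _ _] := v _ pr.
have tr := D _ _ (erefl _).
rewrite ee ?pre_rcons //=; last by rewrite -e1 e.
apply/wrun_rcons; exists (h (q ++ w)).1; split => //.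
by move: tr; rewrite pre_rcons.
Qed.

Lemma valid_level h c p : valid h c -> pref p c -> level le (h p).2 (h p).1.
Proof.
move=> v; elim/last_ind: p => [|p a IH] pr.
  by rewrite (valid_root (v _ pr)).
have pr' := pref_rcons pr.
have lp := IH pr'.
have vn := v _ pr.
case: (vn) => D _ P.
have tr := D _ _ (erefl _); rewrite pre_rcons /= in tr.
have lP := level_ctrans lp tr.
case: P => [[q [w [[nw e] e2 lt ac e3]]]|[_ ->]]; last by rewrite pre_rcons.
rewrite e3; rewrite pre_rcons /= in e2 lt ac *.
move: e nw; case/lastP: w lt ac => [|w0 b] // lt ac.
rewrite -rcons_cat => /rcons_inj [ep eb] _; subst b.
have wr0 : wrun le trans w0 (h q).1 (h p).1.
  by rewrite ep; apply: valid_run v _ _; rewrite -ep.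
have wr : wrun le trans (rcons w0 a) (h q).1 (cpost a (h p).1).
  by apply/wrun_rcons; exists (h p).1.
have [J' [wr' _ _ st]] := wrun_mono wr (properW lt) (level_ideal lP).
exact: accel_level lP wr' (st lt) ac.
Qed.


Lemma eventually_const (n : nat -> nat) N : (forall i j, (i <= j)%N -> (n i <= n j)%N) ->
  (forall i, (n i < N)%N) -> exists K, forall j, (K <= j)%N -> n j = n K.
Proof.
move=> mono bnd.
suff : forall b i, (N - n i <= b)%N -> exists K, forall j, (K <= j)%N -> n j = n K.
  by move=> H; apply: (H (N - n 0) 0 (leqnn _)).
elim=> [|b IH] i hb.
  by exfalso; move: hb (bnd i); rewrite leqn0 subn_eq0 ltnNge => ->.
case: (pselect (forall j, (i <= j)%N -> n j = n i)) => [H|]; first by exists i.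
move=> /existsNP [j /not_implyP [ij nj]].
apply: (IH j).
have lt : (n i < n j)%N by rewrite ltn_neqAle (mono _ _ ij) andbT; apply/eqP => e; apply: nj.
have : (N - n j < N - n i)%N by rewrite ltn_sub2l // (bnd j).
by move=> h1; rewrite -ltnS; apply: leq_trans h1 hb.
Qed.

Definition ext (x y : hist * seq Sigma) : Prop :=
  exists a, x.2 = rcons y.2 a /\ (forall r, pref r y.2 -> x.1 r = y.1 r) /\ valid x.1 x.2.

Section Chain.
Variable f : nat -> hist * seq Sigma.
Hypothesis v0 : valid (f 0).1 (f 0).2.
Hypothesis fe : forall i, ext (f i.+1) (f i).
Local Notation c i := (f i).2.
Local Notation h i := (f i).1.
Local Notation L i := ((f i).1 (f i).2).

Lemma no_chain : False.
Proof.
have vi : forall i, valid (h i) (c i).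
  by case=> [|i] //; case: (fe i) => a [_ [_ v]].
have C1 : forall i j, (i <= j)%N -> [/\ pref (c i) (c j),
    forall r, pref r (c i) -> h j r = h i r & size (c j) = size (c i) + (j - i)].
  move=> i; elim=> [|j IH] ij.
    by move: ij; rewrite leqn0 => /eqP ->; split => //; [apply: pref_refl|rewrite addn0].
  case: (eqVneq i j.+1) => [->|nij]; first by split => //; [apply: pref_refl|rewrite subnn addn0].
  have ij' : (i <= j)%N by rewrite -ltnS ltn_neqAle nij.
  have [p1 e1 s1] := IH ij'.
  case: (fe j) => a [ca [ea _]].
  split.
  - by apply: pref_trans p1 _; exists [:: a]; rewrite ca cats1.
  - move=> r pr; transitivity ((f j).1 r); first exact: ea (pref_trans pr p1).
    exact: e1 pr.
  - by rewrite ca size_rcons s1 subSn // addnS.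
have HL : forall i j, (i <= j)%N -> h j (c i) = L i.
  by move=> i j ij; have [_ e _] := C1 i j ij; apply: e; apply: pref_refl.
have mono : forall i j, (i <= j)%N -> ((L i).2 <= (L j).2)%N.
  move=> i j ij; have [[w ew] _ _] := C1 i j ij.
  have := @valid_mono (h j) (c j) (c i) w (vi j); rewrite -ew HL //.
  by apply; apply: pref_refl.
have lev : forall i, level le (L i).2 (L i).1 by move=> i; apply: valid_level (vi i) (pref_refl _).
have [N HN] := level_bound.
have [K HK] := @eventually_const (fun i => (L i).2) N mono (fun i => HN _ _ (lev i)).
case: HV => _ _ [_ [[_ wq] _]] _ _.
have [k [k' [kk' inc]]] := wq (fun k => exist _ (L (K + k)).1 (level_ideal (lev (K + k)))).
rewrite /Idl_incl /= in inc.
set i := K + k in inc; set j := K + k' in inc.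
have ij : (i < j)%N by rewrite ltn_add2l.
have Ki : (K <= i)%N by apply: leq_addr.
have [j' ej] : exists j', j = j'.+1 by case: (j) ij => // j'' _; exists j''.
have ij' : (i <= j')%N by rewrite -ltnS -ej.
case: (fe j') => a [ca [_ _]]; rewrite -ej in ca.
have vj : validnode (h j) (c j) by apply: (vi j); apply: pref_refl.
have nj : (L j).2 = (L j').2.
  by rewrite (HK j) ?(HK j') //; [apply: leq_trans ij' | apply: leq_trans (ltnW ij)].
have ni : (L i).2 = (L j).2 by rewrite (HK i) // (HK j) //; apply: leq_trans (ltnW ij).
have hj' : h j (c j') = L j' by apply: HL; rewrite ej.
have vj' : validnode (h j) (rcons (c j') a) by rewrite -ca.
have [_ eqpre] := valid_step vj'.
have Lpre : L j = pre (h j) (c j).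
  have e0 : (h j (rcons (c j') a)).2 = (h j (c j')).2 by rewrite -ca hj' nj.
  by rewrite ca (eqpre e0).
have [[w ew] _ sz] := C1 i j (ltnW ij).
have nw : w != [::].
  apply/eqP => w0; move: sz; rewrite ew w0 cats0 => /eqP.
  by rewrite -{1}[size (c i)]addn0 eqn_add2l eq_sym subn_eq0 leqNgt ij.
have an : ancestor_path (c i) (c j) w by split.
case: vj => _ NE P.
have hi : h j (c i) = L i by apply: HL; apply: ltnW.
have neq : (L i).1 <> (L j).1.
  by move=> e; apply: NE; exists (c i), w; split => //; rewrite hi e Lpre.
have lt : (L i).1 `<` (L j).1.
  split => // sub; apply: neq; apply/seteqP; split => //.
case: P => [[q [w' [_ _ _ _ e3]]]|[nx _]].
- by move: e3; rewrite Lpre => /eqP; rewrite -[X in X == _]addn0 -addn1 eqn_add2l.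
- apply: nx; exists (c i), w; split => //; rewrite hi -Lpre //.
Qed.
End Chain.


Lemma catK (q w w' : seq Sigma) : q ++ w = q ++ w' -> w = w'.
Proof. by elim: q => //= x q IH [] /IH. Qed.

Lemma accel_fun w I J1 J2 : accel le trans w I J1 -> accel le trans w I J2 -> J1 = J2.
Proof. by case=> [[h1 ->]|[h1 ->]] [[h2 ->]|[h2 ->]]. Qed.

Lemma acc_ext x : valid x.1 x.2 -> Acc ext x.
Proof.
move=> vx; apply: contrapT => nacc.
have step : forall y, ~ Acc ext y -> exists z, ext z y /\ ~ Acc ext z.
  move=> y ny; apply: contrapT => nz; apply: ny; constructor => z ezy.
  apply: contrapT => nAz; apply: nz; by exists z.
pose g y := match pselect (exists z, ext z y /\ ~ Acc ext z) with
            | left ex => projT1 (cid ex) | right _ => y end.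
have gP : forall y, ~ Acc ext y -> ext (g y) y /\ ~ Acc ext (g y).
  move=> y ny; rewrite /g; case: pselect => [ex|nex]; last by exfalso; apply: nex; apply: step.
  exact: projT2 (cid ex).
pose f i := iter i g x.
have nf : forall i, ~ Acc ext (f i) by elim=> [|i IH] //=; case: (gP _ IH).
apply: (@no_chain f) => // i; exact: (gP _ (nf i)).1.
Qed.

Lemma fin_uniform (T : finType) (P : T -> nat -> Prop) :
  (forall y D D', (D <= D')%N -> P y D -> P y D') -> (forall y, exists D, P y D) ->
  exists D, forall y, P y D.
Proof.
move=> mono ex.
suff : forall s : seq T, exists D, forall y, y \in s -> P y D.
  by move=> /(_ (enum T)) [D HD]; exists D => y; apply: HD; rewrite mem_enum.
elim=> [|y s [Ds HDs]]; first by exists 0.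
have [Dy HDy] := ex y; exists (maxn Dy Ds) => z; rewrite inE => /orP [/eqP ->|zs].
- by apply: mono HDy; apply: leq_maxl.
- by apply: mono (HDs _ zs); apply: leq_maxr.
Qed.

Definition Bnd (x : hist * seq Sigma) D := forall h' d, (forall r, pref r x.2 -> h' r = x.1 r) ->
  valid h' (x.2 ++ d) -> (size d <= D)%N.

Definition chc (h' : hist) (c : seq Sigma) a (o : option 'I_(size c).+1) :=
  match o with
  | None => h' (rcons c a) = pre h' (rcons c a)
  | Some k => exists w, [/\ ancestor_path (take k c) (rcons c a) w,
      accel le trans w (pre h' (rcons c a)).1 (h' (rcons c a)).1 &
      (h' (rcons c a)).2 = (pre h' (rcons c a)).2.+1]
  end.
Arguments chc : clear implicits.

Lemma bound_acc x : Acc ext x -> valid x.1 x.2 -> exists D, Bnd x D.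
Proof.
elim=> {}x _ IH vx.
case: x IH vx => h c IH vx /=.
pose P (y : Sigma * option 'I_(size c).+1) D := forall h' d,
  (forall r, pref r c -> h' r = h r) -> valid h' (c ++ (y.1 :: d)) -> chc h' c y.1 y.2 ->
  (size d <= D)%N.
have [D HD] : exists D, forall y, P y D.
  apply: fin_uniform.
    by move=> y D D' DD' HP h' d ag v ch; apply: leq_trans DD'; apply: HP ag v ch.
  move=> [a o]; rewrite /P /=.
  case: (pselect (exists h1 d1, [/\ (forall r, pref r c -> h1 r = h r),
      valid h1 (c ++ (a :: d1)) & chc h1 c a o])) => [[h1 [d1 [ag1 v1 ch1]]]|nex]; last first.
    by exists 0 => h' d ag v ch; exfalso; apply: nex; exists h', d.
  have v1' : valid h1 (rcons c a).
    by apply: valid_pref v1 _; exists d1; rewrite cat_rcons.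
  have ex1 : ext (h1, rcons c a) (h, c) by exists a; split => //.
  have [D1 HD1] := IH _ ex1 v1'.
  exists D1 => h' d ag v ch; apply: (HD1 h' d) => /=; last by rewrite cat_rcons.
  have pe : pre h' (rcons c a) = pre h1 (rcons c a).
    by rewrite !pre_rcons ag ?ag1 //; apply: pref_refl.
  move=> r [u ru].
  case/lastP: u ru => [|u b]; last first.
    rewrite -rcons_cat => /rcons_inj [cr _]; rewrite ag ?ag1 //; by exists u.
  rewrite cats0 => <-.
  case: o ch ch1 => [k|] /=.
  - move=> [w [[_ e] ac e2]] [w1 [[_ e1] ac1 e12]].
    rewrite e in e1; have ew := catK e1; subst w1.
    rewrite pe in ac e2.
    have := accel_fun ac ac1; move: e2 e12.
    case: (h' (rcons c a)) => J m; case: (h1 (rcons c a)) => J1 m1 /= -> -> -> //.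
  - by move=> -> ->.
exists D.+1 => h' [|a d] ag v //=.
rewrite ltnS.
have [o ch] : exists o, chc h' c a o.
  have vn : validnode h' (rcons c a) by apply: v; exists d; rewrite cat_rcons.
  case: vn => _ _ [[q [w [an e2 lt ac e3]]]|[_ e]]; last by exists None.
  case: (an) => nw e.
  have [w' cw] := anc_split nw e.
  have szq : (size q < (size c).+1)%N by rewrite ltnS cw size_cat leq_addr.
  have tq : take (Ordinal szq) c = q by rewrite /= cw take_size_cat.
  by exists (Some (Ordinal szq)); exists w; split => //; rewrite tq.
exact: (HD (a, o) h' d ag v ch).
Qed.

Lemma depth_bound : exists D, forall h c, valid h c -> (size c <= D)%N.
Proof.
pose h0 : hist := fun _ => (I0, 0).
have v0 : valid h0 [::].
  move=> p [w] /esym; case: p => // _; split.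
  - by move=> q a; case: q.
  - by move=> [q [w' [[nw e] _]]]; move: e; case: w' nw => // b w' _; case: q.
  - right; split => //; by move=> [q [w' [[nw e] _]]]; move: e; case: w' nw => // b w' _; case: q.
have [D HD] := @bound_acc (h0, [::]) (@acc_ext (h0, [::]) v0) v0.
exists D => h c v; apply: (HD h c) => //= r [u] /esym; case: r => // _.
have pr : pref [::] c by exists c.
by rewrite (valid_root (v _ pr)).
Qed.


Lemma present_depth D h t d l : (forall h c, valid h c -> (size c <= D)%N) ->
  inv h t -> t d = Some l -> (size d <= D.+1)%N.
Proof.
move=> HD [Hanc _] td; case/lastP: d td => [|p a] td //.
have vp : valid h p.
  move=> r [u pu]; have := Hanc _ _ td r (rcons u a) _ _.
  by case=> //; [rewrite -cats1 -size_eq0 size_cat addn1|rewrite pu rcons_cat].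
by rewrite size_rcons ltnS; apply: HD vp.
Qed.

Definition M D (t : kmtree Sigma X) :=
  (\sum_(k < D.+2) #|[pred x : k.-tuple Sigma | `[< marked t x >] ]|)%N.

Definition Bd D := (\sum_(k < D.+2) #|{: k.-tuple Sigma}|)%N.

Lemma M_bound D t : (M D t <= Bd D)%N.
Proof. by apply: leq_sum => k _; apply: max_card. Qed.

Lemma M_incr D t t' c : (forall d, marked t d -> marked t' d) -> marked t' c ->
  ~ marked t c -> (size c <= D.+1)%N -> (M D t < M D t')%N.
Proof.
move=> mono mc nmc sc.
have sc' : (size c < D.+2)%N by [].
pose j := Ordinal sc'.
rewrite /M (bigD1 j) //= [X in (_ < X)%N](bigD1 j) //=.
rewrite -addSn; apply: leq_add.
- apply: proper_card; apply/properP; split.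
  + apply/fintype.subsetP => x; rewrite !inE => m; exact: mono m.
  + exists (in_tuple c : j.-tuple Sigma); rewrite !inE.
    * exact: mc.
    * by apply/asboolPn.
- apply: leq_sum => k _; apply: subset_leq_card; apply/fintype.subsetP => x; rewrite !inE.
  by move=> m; exact: mono m.
Qed.

Lemma km_main : km_terminates le trans I0.
Proof.
have [D HD] := depth_bound.
suff : forall n t h, inv h t -> (Bd D - M D t <= n)%N -> Acc (fun t' t => km_step le trans t t') t.
  by move=> H; apply: (H _ _ _ init_inv (leqnn _)).
elim=> [|n IH] t h it hn; constructor => t' st;
  have [c [h' [it' mono mc nmc [l tc]]]] := step_inv it st;
  have sc := present_depth HD it tc;
  have lt := M_incr mono mc nmc sc;
  have bd := M_bound D t'.
- exfalso; move: hn; rewrite leqn0 subn_eq0 => hb.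
  by have := leq_trans bd hb; rewrite leqNgt lt.
- apply: (IH t' h' it').
  rewrite -ltnS; apply: leq_trans hn; apply: ltn_sub2l => //.
  by apply: leq_trans lt bd.
Qed.

End Main.

Theorem theorem8 (Sigma : finType) (X : Type) (le : X -> X -> Prop)
  (trans : Sigma -> X -> X -> Prop) (I0 : set X) :
  very_WSTS le trans -> is_ideal le I0 -> km_terminates le trans I0.
Proof. by move=> HV iI0; apply: km_main. Qed.
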